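(* Let $(U_n)_{n\in\mathbb{Z}}$ satisfy $U_n\in\mathcal{S}$ for all $n$ and $U_n=I_2$ for all $|n|\ge N_0$, where $N_0\ge1$ is an integer, and let $\mathcal{U}$ be the associated quantum walk evolution. Let $\Psi^{(1)},\Psi^{(2)}\in\mathcal{B}$ be defined by $\Psi^{(1)}(N_0)=(1,0)^T$, $\Psi^{(1)}(n)=0$ for $n\ne N_0$, and $\Psi^{(2)}(-N_0)=(0,1)^T$, $\Psi^{(2)}(n)=0$ for $n\neq -N_0$. Then there exist constants $C>0$ and $0<M<1$ such that for $k=1,2$, $$\|(\mathcal{U}^L\Psi^{(k)})(n)\|_{\mathbb{C}^2}\le C\,L^{2N_0-1}M^L$$ for all $|n|\le N_0$ and all $L\in\mathbb{N}$.
   Context: $\mathcal{S}:=\{M=(m_{jk})\in U(2): m_{11}=m_{22}\neq 0\}$. For each $n$ set $P_n:=\begin{pmatrix}1&0\\0&0\end{pmatrix}U_n$, $Q_n:=\begin{pmatrix}0&0\\0&1\end{pmatrix}U_n$. The state space is $\mathcal{B}=\ell^\infty(\mathbb{Z};\mathbb{C}^2)$ of bounded sequences $\Psi=(\Psi(n))_{n\in\mathbb{Z}}$ with $\Psi(n)\in\mathbb{C}^2$ (column vectors), and the evolution $\mathcal{U}:\mathcal{B}\to\mathcal{B}$ is $(\mathcal{U}\Psi)(n)=P_{n+1}\Psi(n+1)+Q_{n-1}\Psi(n-1)$. *)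

(* Defs.v *)
From HB Require Import structures.
From mathcomp Require Import all_boot all_order all_algebra.
From mathcomp Require Import complex.
From mathcomp Require Import reals.
Set Implicit Arguments. Unset Strict Implicit. Unset Printing Implicit Defensive.
Import Order.TTheory GRing.Theory Num.Theory.
Local Open Scope ring_scope.

Section QW.
Variable R : realType.
Local Notation C := R[i].

Definition adjmx (M : 'M[C]_2) : 'M[C]_2 := (map_mx (@conjc R) M)^T.

Definition unitary2 (M : 'M[C]_2) : Prop := M *m adjmx M = 1%:M.

Definition inS (M : 'M[C]_2) : Prop :=
  unitary2 M /\ M 0 0 = M 1 1 /\ M 0 0 <> 0.

Definition E1 : 'M[C]_2 := \matrix_(i, j) (if (i == 0) && (j == 0) then 1 else 0).
Definition E2 : 'M[C]_2 := \matrix_(i, j) (if (i == 1) && (j == 1) then 1 else 0).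

Definition Pn (U : int -> 'M[C]_2) (n : int) : 'M[C]_2 := E1 *m U n.
Definition Qn (U : int -> 'M[C]_2) (n : int) : 'M[C]_2 := E2 *m U n.

Definition state := int -> 'cV[C]_2.

Definition evol (U : int -> 'M[C]_2) (Psi : state) : state :=
  fun n => Pn U (n + 1) *m Psi (n + 1) + Qn U (n - 1) *m Psi (n - 1).

Definition cnorm2 (v : 'cV[C]_2) : R :=
  Num.sqrt (\sum_(i < 2) (complex.Re (v i 0) ^+ 2 + complex.Im (v i 0) ^+ 2)).

Definition e1v : 'cV[C]_2 := \col_i (if i == 0 then 1 else 0).
Definition e2v : 'cV[C]_2 := \col_i (if i == 1 then 1 else 0).

Definition Psi1 (N0 : nat) : state := fun n => if n == (N0%:Z) then e1v else 0.
Definition Psi2 (N0 : nat) : state := fun n => if n == - (N0%:Z) then e2v else 0.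

Definition Psik (N0 : nat) (k : 'I_2) : state :=
  if k == 0 then Psi1 N0 else Psi2 N0.

End QW.

(* Main.v *)
Require Import Defs.
From HB Require Import structures.
From mathcomp Require Import all_boot all_order all_algebra.
From mathcomp Require Import complex.
From mathcomp Require Import reals.
From mathcomp Require Import zify ring lra.
Import Order.TTheory GRing.Theory Num.Theory.
Local Open Scope ring_scope.
Definition nr {R : realType} (c : R[i]) : R := complex.Re c ^+ 2 + complex.Im c ^+ 2.

Lemma nrC {R : realType} (c : R[i]) : (nr c)%:C%C = c * c^*.
Proof.
case: c => a b; rewrite /nr /=.
apply/eqP; rewrite eq_complex /=; apply/andP; split; apply/eqP; ring.
Qed.

Lemma nr_ge0 {R : realType} (c : R[i]) : 0 <= nr c.
Proof. by rewrite /nr addr_ge0 // sqr_ge0. Qed.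

Lemma nrM {R : realType} (x y : R[i]) : nr (x * y) = nr x * nr y.
Proof. case: x => a b; case: y => c d; rewrite /nr /=; ring. Qed.

Lemma nrD {R : realType} (x y : R[i]) : nr (x + y) <= 2 * (nr x + nr y).
Proof. case: x => a b; case: y => c d; rewrite /nr /=. have := sqr_ge0 (a - c); have := sqr_ge0 (b - d); nra. Qed.

Lemma nr0 {R : realType} : nr (0 : R[i]) = 0.
Proof. by rewrite /nr /= expr0n /= addr0. Qed.

Lemma nr1 {R : realType} : nr (1 : R[i]) = 1.
Proof. rewrite /nr /=. ring. Qed.

Lemma nr_gt0 {R : realType} (c : R[i]) : c != 0 -> 0 < nr c.
Proof.
case: c => a b; rewrite /nr /= => h.
rewrite lt_def addr_ge0 ?sqr_ge0 // andbT.
apply: contra h => /eqP h0.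
have ha : a ^+ 2 = 0 by have := sqr_ge0 a; have := sqr_ge0 b; lra.
have hb : b ^+ 2 = 0 by have := sqr_ge0 a; have := sqr_ge0 b; lra.
move/eqP: ha; rewrite sqrf_eq0 => /eqP ->.
move/eqP: hb; rewrite sqrf_eq0 => /eqP ->.
by [].
Qed.

Lemma nr2E {R : realType} (u v : R[i]) : nr u + nr v = complex.Re (u * u^* + v * v^*).
Proof. case: u => a b; case: v => c d; rewrite /nr /=; ring. Qed.

Lemma unit_rows {R : realType} (U : 'M[R[i]]_2) (x y : R[i]) :
  unitary2 U ->
  nr (U 0 0 * x + U 0 1 * y) + nr (U 1 0 * x + U 1 1 * y) = nr x + nr y.
Proof.
rewrite /unitary2 => /mulmx1C hU.
have h : forall i j, \sum_k (U k i)^* * U k j = (i == j)%:R.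
  move=> i j; move: (congr1 (fun M : 'M[R[i]]_2 => M i j) hU).
  by rewrite !mxE => <-; apply: eq_bigr => k _; rewrite !mxE.
have h00 := h 0 0; have h01 := h 0 1; have h10 := h 1 0; have h11 := h 1 1.
rewrite !big_ord_recr /= !big_ord0 !add0r in h00 h01 h10 h11.
have e0 : widen_ord (leqnSn 1) ord_max = 0 :> 'I_2 by apply/val_inj.
have e1 : ord_max = 1 :> 'I_2 by apply/val_inj.
rewrite e0 e1 in h00 h01 h10 h11.
rewrite !nr2E; congr complex.Re; rewrite !rmorphD !rmorphM /=.
set a := U 0 0 in h00 h01 h10 h11 *.
set b := U 0 1 in h00 h01 h10 h11 *.
set c := U 1 0 in h00 h01 h10 h11 *.
set d := U 1 1 in h00 h01 h10 h11 *.
have -> : (a * x + b * y) * (a^* * x^* + b^* * y^*) + (c * x + d * y) * (c^* * x^* + d^* * y^*)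
  = x * x^* * (a^* * a + c^* * c) + y * y^* * (b^* * b + d^* * d)
    + x * y^* * (b^* * a + d^* * c) + y * x^* * (a^* * b + c^* * d) by ring.
rewrite h00 h01 h10 h11; ring.
Qed.

Lemma w0 : widen_ord (leqnSn 1) ord_max = 0 :> 'I_2. Proof. by apply/val_inj. Qed.
Lemma o1 : ord_max = 1 :> 'I_2. Proof. by apply/val_inj. Qed.

Lemma evol_a {R : realType} (U : int -> 'M[R[i]]_2) (P : state R) (n : int) :
  evol U P n 0 0 = U (n + 1) 0 0 * P (n + 1) 0 0 + U (n + 1) 0 1 * P (n + 1) 1 0.
Proof.
rewrite /evol /Pn /Qn /E1 /E2 !mxE !big_ord_recr !big_ord0 /= !mxE.
rewrite !big_ord_recr !big_ord0 /= !mxE /= w0 o1; ring.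
Qed.

Lemma evol_b {R : realType} (U : int -> 'M[R[i]]_2) (P : state R) (n : int) :
  evol U P n 1 0 = U (n - 1) 1 0 * P (n - 1) 0 0 + U (n - 1) 1 1 * P (n - 1) 1 0.
Proof.
rewrite /evol /Pn /Qn /E1 /E2 !mxE !big_ord_recr !big_ord0 /= !mxE.
rewrite !big_ord_recr !big_ord0 /= !mxE /= w0 o1; ring.
Qed.

Definition en {R : realType} (v : 'cV[R[i]]_2) : R := nr (v 0 0) + nr (v 1 0).

Lemma cnorm2E {R : realType} (v : 'cV[R[i]]_2) : cnorm2 v = Num.sqrt (en v).
Proof. by rewrite /cnorm2 /en /nr !big_ord_recr big_ord0 /= w0 o1 add0r. Qed.

Lemma en_ge0 {R : realType} (v : 'cV[R[i]]_2) : 0 <= en v.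
Proof. by rewrite /en addr_ge0 // nr_ge0. Qed.

Lemma sum_sub {R : realType} (f : nat -> R) (a b c d : nat) :
  (forall r, 0 <= f r) -> (a <= c)%N -> (c <= d)%N -> (d <= b)%N ->
  \sum_(c <= r < d) f r <= \sum_(a <= r < b) f r.
Proof.
move=> f0 hac hcd hdb.
rewrite (big_cat_nat hac (leq_trans hcd hdb)) /= (big_cat_nat hcd hdb) /=.
have h1 : 0 <= \sum_(a <= r < c) f r by apply: sumr_ge0.
have h2 : 0 <= \sum_(d <= r < b) f r by apply: sumr_ge0.
lra.
Qed.

Lemma bernoulli {R : realType} (x : R) (n : nat) : 0 <= x <= 1 -> 1 - n%:R * x <= (1 - x) ^+ n.
Proof.
case/andP=> h0 h1; elim: n => [|n IH]; first by rewrite expr0 mul0r subr0.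
rewrite exprS -natr1.
have h2 : 0 <= (1 - x) by lra.
have h3 : (1 - x) * (1 - n%:R * x) <= (1 - x) * (1 - x) ^+ n by apply: ler_wpM2l.
have h4 : 0 <= n%:R * x * x by rewrite mulr_ge0 // mulr_ge0.
nra.
Qed.

Section Main.
Variable R : realType.
Variable U : int -> 'M[R[i]]_2.
Variable N0 : nat.
Variable P : state R.
Hypothesis hS : forall n : int, inS (U n).
Hypothesis hI : forall n : int, (N0 <= `|n|)%N -> U n = 1%:M.
Hypothesis hPa : forall n : int, N0%:Z < n -> P n 0 0 = 0.
Hypothesis hPb : forall n : int, n < - N0%:Z -> P n 1 0 = 0.
Hypothesis hP1 : forall n : int, en (P n) <= 1.

Definition ps (s : nat) : state R := iter s (evol U) P.
Definition aa s n := ps s n 0 0.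
Definition bb s n := ps s n 1 0.

Lemma psS s n : ps s.+1 n = evol U (ps s) n.
Proof. by []. Qed.

Lemma one00 : (1%:M : 'M[R[i]]_2) 0 0 = 1. Proof. by rewrite mxE. Qed.
Lemma one01 : (1%:M : 'M[R[i]]_2) 0 1 = 0. Proof. by rewrite mxE. Qed.
Lemma one10 : (1%:M : 'M[R[i]]_2) 1 0 = 0. Proof. by rewrite mxE. Qed.
Lemma one11 : (1%:M : 'M[R[i]]_2) 1 1 = 1. Proof. by rewrite mxE. Qed.

Lemma out_a s n : N0%:Z < n -> aa s n = 0.
Proof.
elim: s n => [|s IH] n hn; first by rewrite /aa /ps /= hPa.
rewrite /aa psS evol_a hI; last by lia.
rewrite one00 one01 mul0r addr0 mul1r; apply: IH; lia.
Qed.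

Lemma out_b s n : n < - N0%:Z -> bb s n = 0.
Proof.
elim: s n => [|s IH] n hn; first by rewrite /bb /ps /= hPb.
rewrite /bb psS evol_b hI; last by lia.
rewrite one10 one11 mul0r add0r mul1r; apply: IH; lia.
Qed.

Lemma aN0 s : (0 < s)%N -> aa s N0%:Z = 0.
Proof.
case: s => // s _; rewrite /aa psS evol_a hI; last by lia.
rewrite one00 one01 mul0r addr0 mul1r; apply: out_a; lia.
Qed.

Definition r0 s m := nr (U m 0 0 * aa s m + U m 0 1 * bb s m).
Definition r1 s m := nr (U m 1 0 * aa s m + U m 1 1 * bb s m).

Lemma r01 s m : r0 s m + r1 s m = en (ps s m).
Proof. by rewrite /r0 /r1 unit_rows //; case: (hS m). Qed.

Lemma aS s n : aa s.+1 n = U (n + 1) 0 0 * aa s (n + 1) + U (n + 1) 0 1 * bb s (n + 1).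
Proof. by rewrite /aa psS evol_a. Qed.
Lemma bS s n : bb s.+1 n = U (n - 1) 1 0 * aa s (n - 1) + U (n - 1) 1 1 * bb s (n - 1).
Proof. by rewrite /bb psS evol_b. Qed.

Definition E s := \sum_(0 <= j < (2 * N0).+1) en (ps s (N0%:Z - j%:Z)).
Definition leak s := nr (bb s N0%:Z).

Lemma E_step s : E s.+1 + r0 s (- N0%:Z) + r1 s N0%:Z = E s.
Proof.
have hA : \sum_(0 <= j < (2 * N0).+1) r0 s (N0%:Z - j%:Z + 1)
   = r0 s (N0%:Z + 1) + \sum_(0 <= j < 2 * N0) r0 s (N0%:Z - j%:Z).
  rewrite big_nat_recl //; congr (_ + _); first by congr r0; lia.
  by apply: eq_bigr => j _; congr r0; lia.
have hB : \sum_(0 <= j < (2 * N0).+1) r1 s (N0%:Z - j%:Z - 1)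
   = \sum_(0 <= j < 2 * N0) r1 s (N0%:Z - j%:Z - 1) + r1 s (N0%:Z - (2 * N0)%:Z - 1).
  by rewrite big_nat_recr.
have hC : \sum_(0 <= j < (2 * N0).+1) r0 s (N0%:Z - j%:Z)
   = \sum_(0 <= j < 2 * N0) r0 s (N0%:Z - j%:Z) + r0 s (N0%:Z - (2 * N0)%:Z).
  by rewrite big_nat_recr.
have hD : \sum_(0 <= j < (2 * N0).+1) r1 s (N0%:Z - j%:Z)
   = r1 s (N0%:Z) + \sum_(0 <= j < 2 * N0) r1 s (N0%:Z - j%:Z - 1).
  rewrite big_nat_recl //; congr (_ + _); first by congr r1; lia.
  by apply: eq_bigr => j _; congr r1; lia.
have hE1 : E s.+1 = \sum_(0 <= j < (2 * N0).+1) r0 s (N0%:Z - j%:Z + 1)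
              + \sum_(0 <= j < (2 * N0).+1) r1 s (N0%:Z - j%:Z - 1).
  rewrite /E -big_split /=; apply: eq_bigr => j _.
  by rewrite /en evol_a evol_b /r0 /r1 /aa /bb.
have hE0 : E s = \sum_(0 <= j < (2 * N0).+1) r0 s (N0%:Z - j%:Z)
              + \sum_(0 <= j < (2 * N0).+1) r1 s (N0%:Z - j%:Z).
  rewrite /E -big_split /=; apply: eq_bigr => j _; by rewrite r01.
have z0 : r0 s (N0%:Z + 1) = 0.
  rewrite /r0 hI; last by lia.
  rewrite one00 one01 mul0r addr0 mul1r out_a ?nr0 //; lia.
have z1 : r1 s (N0%:Z - (2 * N0)%:Z - 1) = 0.
  rewrite /r1 hI; last by lia.
  rewrite one10 one11 mul0r add0r mul1r out_b ?nr0 //; lia.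
have e2 : N0%:Z - (2 * N0)%:Z = - N0%:Z by lia.
rewrite hE1 hE0 hA hB hC hD z0 z1 e2; lra.
Qed.


Lemma E_ge0 s : 0 <= E s.
Proof. by apply: sumr_ge0 => j _; apply: en_ge0. Qed.

Lemma leak_ge0 s : 0 <= leak s.
Proof. exact: nr_ge0. Qed.

Lemma leak_le s : E s.+1 + leak s <= E s.
Proof.
rewrite -(E_step s).
have -> : r1 s N0%:Z = leak s.
  rewrite /r1 /leak hI; last by lia.
  by rewrite one10 one11 mul0r add0r mul1r.
have := nr_ge0 (U (- N0%:Z) 0 0 * aa s (- N0%:Z) + U (- N0%:Z) 0 1 * bb s (- N0%:Z)).
rewrite -/(r0 s (- N0%:Z)); lra.
Qed.

Lemma E_mono s n : E (s + n) <= E s.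
Proof.
elim: n => [|n IH]; first by rewrite addn0.
rewrite addnS; have := leak_le (s + n); have := leak_ge0 (s + n); lra.
Qed.

Lemma tele t n : \sum_(t <= r < t + n) leak r <= E t - E (t + n).
Proof.
elim: n => [|n IH]; first by rewrite addn0 big_geq // subrr.
rewrite addnS big_nat_recr /=; last by lia.
have := leak_le (t + n); lra.
Qed.

Definition W j s := \sum_(s - j <= r < s + j + 1) leak r.

Lemma W_ge0 j s : 0 <= W j s.
Proof. by apply: sumr_ge0 => r _; apply: leak_ge0. Qed.

Lemma nrN (x : R[i]) : nr (- x) = nr x.
Proof. by case: x => a b; rewrite /nr /=; ring. Qed.

Lemma nr10 m : nr (U m 1 0) <= 1.
Proof.
have := @unit_rows R (U m) 1 0 (proj1 (hS m)).
rewrite !mulr1 !mulr0 !addr0 nr1 nr0 addr0.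
have := nr_ge0 (U m 0 0); lra.
Qed.

Lemma nr11 m : 0 < nr (U m 1 1).
Proof. case: (hS m) => _ [<- h]; apply: nr_gt0; exact/eqP. Qed.

Lemma claim j : (j <= 2 * N0)%N -> exists c, 0 <= c /\
  forall s, (j < s)%N -> en (ps s (N0%:Z - j%:Z)) <= c * W j s.
Proof.
elim: j => [|j IH] hj.
  exists 1; split => // s hs.
  rewrite subr0 /W subn0 addn0 addn1 big_nat1 mul1r /leak /en.
  by rewrite -/(aa s N0%:Z) aN0 // nr0 add0r.
have [c [c0 hc]] := IH (ltnW hj).
set m := N0%:Z - j.+1%:Z.
set beta := nr (U m 1 1).
have hb : 0 < beta by apply: nr11.
exists ((1 + 2 / beta) * (2 * c)); split.
  apply: mulr_ge0; last lra.
  have : 0 <= 2 / beta by apply: divr_ge0 => //; lra.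
  lra.
move=> s hs.
have em : m + 1 = N0%:Z - j%:Z by rewrite /m; lia.
have em' : N0%:Z - j%:Z - 1 = m by rewrite /m; lia.
set X := en (ps s.-1 (N0%:Z - j%:Z)).
set Y := en (ps s.+1 (N0%:Z - j%:Z)).
have hX : nr (aa s m) <= X.
  have es : s = s.-1.+1 by lia.
  rewrite es aS em /X -(r01 s.-1) /r0.
  have := nr_ge0 (U (N0%:Z - j%:Z) 1 0 * aa s.-1 (N0%:Z - j%:Z) +
     U (N0%:Z - j%:Z) 1 1 * bb s.-1 (N0%:Z - j%:Z)).
  rewrite -/(r1 _ _); lra.
have hY : nr (bb s.+1 (N0%:Z - j%:Z)) <= Y.
  rewrite /Y /en -/(aa _ _) -/(bb _ _).
  have := nr_ge0 (aa s.+1 (N0%:Z - j%:Z)); lra.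
have hbm : beta * nr (bb s m) <= 2 * (X + Y).
  have e : U m 1 1 * bb s m = bb s.+1 (N0%:Z - j%:Z) - U m 1 0 * aa s m.
    by rewrite bS em'; ring.
  rewrite /beta -nrM e.
  apply: le_trans (nrD _ _) _.
  rewrite nrN nrM.
  have h1 : nr (U m 1 0) * nr (aa s m) <= nr (aa s m).
    have := nr10 m; have := nr_ge0 (aa s m); nra.
  lra.
have hbm' : nr (bb s m) <= 2 * (X + Y) / beta.
  by rewrite ler_pdivlMr // mulrC.
have hen : en (ps s m) <= (1 + 2 / beta) * (X + Y).
  rewrite /en -/(aa _ _) -/(bb _ _).
  have -> : (1 + 2 / beta) * (X + Y) = (X + Y) + 2 * (X + Y) / beta by ring.
  have : 0 <= Y by apply: en_ge0.
  lra.
have hXW : X <= c * W j.+1 s.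
  apply: le_trans (hc _ _) _; first by lia.
  apply: ler_wpM2l => //; apply: sum_sub; try lia; exact: leak_ge0.
have hYW : Y <= c * W j.+1 s.
  apply: le_trans (hc _ _) _; first by lia.
  apply: ler_wpM2l => //; apply: sum_sub; try lia; exact: leak_ge0.
apply: le_trans hen _; rewrite -mulrA; apply: ler_wpM2l.
  have : 0 <= 2 / beta by apply: divr_ge0 => //; lra.
  lra.
lra.
Qed.


Lemma claimE : exists g, 0 <= g /\ forall s, (2 * N0 < s)%N -> E s <= g * W (2 * N0) s.
Proof.
suff H : forall J, (J <= (2 * N0).+1)%N -> exists g, 0 <= g /\ forall s, (2 * N0 < s)%N ->
   \sum_(0 <= j < J) en (ps s (N0%:Z - j%:Z)) <= g * W (2 * N0) s.
  exact: H.
elim => [|J IH] hJ.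
  exists 0; split => // s _; rewrite big_geq // mul0r; lra.
have [g [g0 hg]] := IH (ltnW hJ).
have [c [c0 hc]] := @claim J ltac:(lia).
exists (g + c); split; first lra.
move=> s hs; rewrite big_nat_recr //= mulrDl.
have h1 := hg s hs.
have h2 : en (ps s (N0%:Z - J%:Z)) <= c * W (2 * N0) s.
  apply: le_trans (hc s _) _; first by lia.
  apply: ler_wpM2l => //; apply: sum_sub; try lia; exact: leak_ge0.
lra.
Qed.

Lemma E0_le : E 0 <= (2 * N0).+1%:R.
Proof.
have -> : (2 * N0).+1%:R = \sum_(0 <= j < (2 * N0).+1) (1 : R).
  by rewrite sumr_const_nat subn0.
by apply: ler_sum => j _; apply: hP1.
Qed.

Lemma decay : exists q, 0 <= q /\ q < 1 /\
  forall t, (0 < t)%N -> E (t + (4 * N0).+1) <= q * E t.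
Proof.
have [g [g0 hg]] := claimE.
exists (g / (1 + g)); split; first by apply: divr_ge0 => //; lra.
split; first by rewrite ltr_pdivrMr; lra.
move=> t ht.
have hK : E (t + (4 * N0).+1) <= E (t + 2 * N0).
  have -> : (t + (4 * N0).+1 = (t + 2 * N0) + (2 * N0).+1)%N by lia.
  exact: E_mono.
have hW : W (2 * N0) (t + 2 * N0) <= E t - E (t + (4 * N0).+1).
  rewrite /W.
  have -> : (t + 2 * N0 - 2 * N0 = t)%N by lia.
  have -> : (t + 2 * N0 + 2 * N0 + 1 = t + (4 * N0).+1)%N by lia.
  exact: tele.
have h := hg (t + 2 * N0)%N ltac:(lia).
have hm : E (t + (4 * N0).+1) * (1 + g) <= g * E t.
  have : g * W (2 * N0) (t + 2 * N0) <= g * (E t - E (t + (4 * N0).+1)).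
    exact: ler_wpM2l.
  lra.
rewrite mulrAC ler_pdivlMr; lra.
Qed.

Lemma iterate q : 0 <= q -> (forall t, (0 < t)%N -> E (t + (4 * N0).+1) <= q * E t) ->
  forall i, E (1 + i * (4 * N0).+1) <= q ^+ i * E 1.
Proof.
move=> q0 hq; elim => [|i IH]; first by rewrite mul0n addn0 expr0 mul1r.
have -> : (1 + i.+1 * (4 * N0).+1 = (1 + i * (4 * N0).+1) + (4 * N0).+1)%N by lia.
apply: le_trans (hq _ _) _; first by lia.
rewrite exprS -mulrA; exact: ler_wpM2l.
Qed.


Lemma L_decomp (L K : nat) : (1 <= L)%N -> L = ((1 + (L - 1) %/ K * K) + (L - 1) %% K)%N.
Proof. move=> h; have := divn_eq (L - 1) K; lia. Qed.

Lemma en_le_E L n : (`|n| <= N0)%N -> en (ps L n) <= E L.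
Proof.
move=> hn.
have -> : n = N0%:Z - (`|N0%:Z - n|%N)%:Z by lia.
set j := `|N0%:Z - n|%N.
have hj : (j < (2 * N0).+1)%N by rewrite /j; lia.
rewrite /E.
have := @sum_sub R (fun j => en (ps L (N0%:Z - j%:Z))) 0 (2 * N0).+1 j j.+1
  (fun r => en_ge0 _) (leq0n _) (leqnSn _) hj.
by rewrite big_nat1.
Qed.

Lemma final : exists C M : R, 0 < C /\ 0 < M /\ M < 1 /\
  forall n L, (`|n| <= N0)%N -> (1 <= L)%N ->
    cnorm2 (ps L n) <= C * (L%:R) ^+ (2 * N0 - 1) * M ^+ L.
Proof.
have [q [q0 [q1 hq]]] := decay.
set K := (4 * N0).+1.
set D : R := (2 * N0).+1%:R.
have hD : 1 <= D by rewrite /D ler1n.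
have hK : (0 : R) < K%:R by rewrite ltr0n.
set x := (1 - q) / (2 * K%:R).
have hK1 : (1 : R) <= K%:R by rewrite ler1n.
have hx0 : 0 < x by rewrite /x divr_gt0 //; lra.
have hx1 : x <= 1 / 2.
  rewrite /x ler_pdivrMr; last lra.
  lra.
set Mb := 1 - x.
have hMb0 : 0 < Mb by rewrite /Mb; lra.
have hMb1 : Mb < 1 by rewrite /Mb; lra.
have hMbK : q <= Mb ^+ K.
  have := @bernoulli R x K ltac:(apply/andP; split; lra).
  have -> : K%:R * x = (1 - q) / 2.
    rewrite /x; field; apply: lt0r_neq0; lra.
  rewrite -/Mb; lra.
have hMbKpos : 0 < Mb ^+ K by apply: exprn_gt0.
have hMbK1 : Mb ^+ K <= 1 by apply: exprn_ile1; lra.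
set C0 := D / Mb ^+ K.
have hC0 : 1 <= C0 by rewrite /C0 ler_pdivlMr // mul1r; lra.
set M' := (1 + Mb) / 2.
have hM'0 : 0 < M' by rewrite /M'; lra.
have hM'1 : M' < 1 by rewrite /M'; lra.
have hM'2 : Mb <= M' ^+ 2.
  rewrite /M'; have := sqr_ge0 (1 - Mb); move=> h.
  have -> : ((1 + Mb) / 2) ^+ 2 = Mb + (1 - Mb) ^+ 2 / 4 by field.
  have : 0 <= (1 - Mb) ^+ 2 / 4 by apply: divr_ge0 => //; lra.
  lra.
exists C0, M'; split; first lra.
split => //; split => // n L hn hL.
have E1le : E 1 <= D.
  apply: le_trans E0_le; exact: (E_mono 0 1).

set i := ((L - 1) %/ K)%N.
set r := ((L - 1) %% K)%N.
have hL' : L = ((1 + i * K) + r)%N by rewrite /i /r; apply: L_decomp.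
have hr : (r < K)%N by rewrite /r ltn_mod.
have hEL : E L <= q ^+ i * D.
  have := E_mono (1 + i * K) r; rewrite -hL' => h1; apply: le_trans h1 _.
  apply: le_trans (@iterate q q0 hq i) _.
  by apply: ler_wpM2l; [apply: exprn_ge0|exact: E1le].
have hqi : q ^+ i <= Mb ^+ (i * K).
  rewrite mulnC exprM; apply: lerXn2r; rewrite ?nnegrE //; lra.
have hMbL : Mb ^+ (i * K) * Mb ^+ K <= Mb ^+ L.
  rewrite [in X in _ <= X]hL' (addnC 1) -addnA add1n exprD; apply: ler_wpM2l; first by apply: exprn_ge0; lra.
  apply: ler_wiXn2l; try lra; exact: hr.
have h3 : q ^+ i * Mb ^+ K <= Mb ^+ L.
  apply: le_trans hMbL; apply: ler_wpM2r => //; exact: ltW.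
have hen : en (ps L n) <= C0 * Mb ^+ L.
  apply: le_trans (en_le_E L n hn) _.
  apply: le_trans hEL _.
  rewrite /C0 mulrAC ler_pdivlMr //.
  have -> : q ^+ i * D * Mb ^+ K = D * (q ^+ i * Mb ^+ K) by ring.
  apply: ler_wpM2l => //; lra.
have hML : Mb ^+ L <= (M' ^+ L) ^+ 2.
  rewrite -exprM mulnC exprM; apply: lerXn2r; rewrite ?nnegrE //; lra.
have hpos : 0 <= M' ^+ L by apply: exprn_ge0; lra.
have hfin : en (ps L n) <= (C0 * M' ^+ L) ^+ 2.
  rewrite exprMn; apply: le_trans hen _.
  have hc2 : C0 <= C0 ^+ 2 by rewrite expr2; nra.
  have : 0 <= Mb ^+ L by apply: exprn_ge0; lra.
  nra.
rewrite cnorm2E.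
apply: le_trans (_ : Num.sqrt ((C0 * M' ^+ L) ^+ 2) <= _).
  by rewrite ler_sqrt // sqr_ge0.
rewrite sqrtr_sqr ger0_norm; last by apply: mulr_ge0; lra.
have hLp : 1 <= (L%:R : R) ^+ (2 * N0 - 1) by apply: exprn_ege1; rewrite ler1n.
rewrite -mulrA [_ * M' ^+ L]mulrC mulrA.
have : 0 <= C0 * M' ^+ L by apply: mulr_ge0; lra.
nra.
Qed.


End Main.

Lemma Psik_a {R : realType} (N0 : nat) (k : 'I_2) (n : int) :
  N0%:Z < n -> @Psik R N0 k n 0 0 = 0.
Proof.
move=> h; rewrite /Psik /Psi1 /Psi2.
case: (k == 0).
  by rewrite (_ : (n == N0%:Z) = false) ?mxE //; apply/eqP; lia.
by rewrite (_ : (n == - N0%:Z) = false) ?mxE //; apply/eqP; lia.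
Qed.

Lemma Psik_b {R : realType} (N0 : nat) (k : 'I_2) (n : int) :
  n < - N0%:Z -> @Psik R N0 k n 1 0 = 0.
Proof.
move=> h; rewrite /Psik /Psi1 /Psi2.
case: (k == 0).
  by rewrite (_ : (n == N0%:Z) = false) ?mxE //; apply/eqP; lia.
by rewrite (_ : (n == - N0%:Z) = false) ?mxE //; apply/eqP; lia.
Qed.

Lemma Psik_en {R : realType} (N0 : nat) (k : 'I_2) (n : int) :
  en (@Psik R N0 k n) <= 1.
Proof.
rewrite /Psik /Psi1 /Psi2 /en.
case: (k == 0); [case: (n == N0%:Z) | case: (n == - N0%:Z)];
  rewrite /e1v /e2v !mxE /= ?nr0 ?nr1; lra.
Qed.

Theorem mainTheorem2 (R : realType) (N0 : nat) (U : int -> 'M[R[i]]_2) :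
  (1 <= N0)%N ->
  (forall n : int, inS (U n)) ->
  (forall n : int, (N0 <= `|n|)%N -> U n = 1%:M) ->
  exists (C M : R), 0 < C /\ 0 < M /\ M < 1 /\
    forall (k : 'I_2) (n : int) (L : nat),
      (`|n| <= N0)%N -> (1 <= L)%N ->
      cnorm2 (iter L (evol U) (@Psik R N0 k) n)
        <= C * (L%:R) ^+ (2 * N0 - 1) * M ^+ L.
Proof.
move=> _ hS hI.
have F k := @final R U N0 (@Psik R N0 k) hS hI (@Psik_a R N0 k) (@Psik_b R N0 k) (@Psik_en R N0 k).
have [C1 [M1 [hC1 [hM10 [hM11 H1]]]]] := F 0.
have [C2 [M2 [hC2 [hM20 [hM21 H2]]]]] := F 1.
have [Mx [hMx0 [hMx1 [hMx1' hMx2']]]] : exists Mx : R, 0 < Mx /\ Mx < 1 /\ M1 <= Mx /\ M2 <= Mx.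
  case: (lerP M1 M2) => h; [exists M2 | exists M1]; repeat split; lra.
exists (C1 + C2), Mx; split; first lra.
split => //; split => // k n L hn hL.
have hLp : 0 <= (L%:R : R) ^+ (2 * N0 - 1) by apply: exprn_ge0.
have mono : forall (C M : R), 0 < C -> C <= C1 + C2 -> 0 < M -> M <= Mx ->
  C * L%:R ^+ (2 * N0 - 1) * M ^+ L <= (C1 + C2) * L%:R ^+ (2 * N0 - 1) * Mx ^+ L.
  move=> C M hC hCC hM hMM.
  have hML : M ^+ L <= Mx ^+ L by apply: lerXn2r; rewrite ?nnegrE //; lra.
  have hM0 : 0 <= M ^+ L by apply: exprn_ge0; lra.
  apply: ler_pM; try lra.
    by apply: mulr_ge0; lra.
  by apply: ler_pM; lra.
case: (boolP (k == 0)) => hk.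
  move/eqP: hk => ->.
  apply: le_trans (H1 n L hn hL) _; apply: mono => //; lra.
have -> : k = 1 by apply/val_inj; case: k hk => [[|[|]]] //=.
apply: le_trans (H2 n L hn hL) _; apply: mono => //; lra.
Qed.
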